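(* Let $m\in\mathbb Z\setminus\{0\}$. (a) For $\xi,\xi'\in\mathbb Z_m$ the following are equivalent: (1) there is a positive integer $d$ with $\gcd(\xi,m)=\gcd(\xi',m)=d$ and $\pi(\xi/d)=\pi(\xi'/d)$, where $\pi:\mathbb Z_m\to\mathbb Z_{m/d}$ is the canonical ring homomorphism; (2) $r_i(\xi)=r_i(\xi')$ for every $i\ge1$. (b) The map $\xi\mapsto (r_i(\xi))_{i\ge1}$ is a homeomorphism from the group of units $\mathbb Z_m^\times$ onto $(\mathbb Z/m\mathbb Z)^\times\times(\mathbb Z/m\mathbb Z)^{\mathbb N}$ with the product topology, where $\mathbb Z/m\mathbb Z$ is identified with $\{0,\dots,|m|-1\}$ and $(\mathbb Z/m\mathbb Z)^\times$ with the elements of $\{0,\dots,|m|-1\}$ coprime to $m$.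
   Context: $\mathbb Z_m=\varprojlim\mathbb Z/m^h\mathbb Z$ is the ring of $m$-adic integers with the $m$-adic topology. Every nonzero ideal of $\mathbb Z_m$ is uniquely of the form $d\mathbb Z_m$ with $d$ a positive integer whose prime divisors divide $m$; for $n\in\mathbb Z$, $\xi\in\mathbb Z_m$, $\gcd(n,\xi)$ is the positive integer $d$ with $n\mathbb Z_m+\xi\mathbb Z_m=d\mathbb Z_m$; since nonzero integers are not zero divisors in $\mathbb Z_m$, $\xi/d\in\mathbb Z_m$ is well defined when $\xi\in d\mathbb Z_m$. The functions $r_i$: for $\xi\in\mathbb Z_m$, $r_0(\xi)=0$, $s_0(\xi)=1$, and for $i\ge1$, $r_i(\xi)\in\{0,\dots,|m|-1\}$ and $s_i(\xi)\in\mathbb Z_m$ are the unique elements with $\xi s_{i-1}(\xi)=m s_i(\xi)+r_i(\xi)$. *)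

(* Defs.v *)
From Stdlib Require Import ClassicalEpsilon.
From mathcomp Require Import all_boot all_order all_algebra.
Set Implicit Arguments. Unset Strict Implicit. Unset Printing Implicit Defensive.
Import Order.TTheory GRing.Theory Num.Theory.

(* An element of Z_m is a sequence (x h)_h with x h in Z/|m|^h Z (as residues
   0 <= x h < |m|^h) compatible with the transition maps Z/m^(h+1) -> Z/m^h. *)
Definition padic := nat -> nat.

Definition is_Zm (m : int) (x : padic) : Prop :=
  forall h : nat, x h < (absz m) ^ h /\ x h.+1 %% (absz m) ^ h = x h.

Definition Zm_of_int (m : int) (n : int) : padic :=
  fun h => absz (n %% ((absz m) ^ h)%:Z)%Z.

Definition Zm_add (m : int) (x y : padic) : padic :=
  fun h => (x h + y h) %% (absz m) ^ h.

Definition Zm_mul (m : int) (x y : padic) : padic :=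
  fun h => (x h * y h) %% (absz m) ^ h.

Definition Zm_one (m : int) : padic := Zm_of_int m 1.

Definition Zm_unit (m : int) (x : padic) : Prop :=
  is_Zm m x /\ exists y, is_Zm m y /\ Zm_mul m x y = Zm_one m.

Definition Zm_ideal_gen (m n : int) (xi : padic) (d : nat) : Prop :=
  forall z, is_Zm m z ->
    ((exists a b, is_Zm m a /\ is_Zm m b /\
        z = Zm_add m (Zm_mul m (Zm_of_int m n) a) (Zm_mul m xi b))
     <-> (exists c, is_Zm m c /\ z = Zm_mul m (Zm_of_int m d%:Z) c)).

Definition Zm_gcd (m n : int) (xi : padic) (d : nat) : Prop :=
  0 < d /\ (forall p, prime p -> p %| d -> p %| absz m) /\ Zm_ideal_gen m n xi d.

(* canonical ring homomorphism Z_m -> Z_n (n | m): reduction mod n^h at level h *)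
Definition Zm_proj (n : int) (x : padic) : padic :=
  fun h => x h %% (absz n) ^ h.

Definition rs_spec (m : int) (xi : padic) (r : nat -> nat) (s : nat -> padic) : Prop :=
  r 0 = 0 /\ s 0 = Zm_one m /\
  forall i, 0 < i ->
    r i < absz m /\ is_Zm m (s i) /\
    Zm_mul m xi (s i.-1) = Zm_add m (Zm_mul m (Zm_of_int m m) (s i)) (Zm_of_int m (r i)%:Z).

Definition Zm_r (m : int) (xi : padic) : nat -> nat :=
  epsilon (inhabits (fun _ => 0)) (fun r => exists s, rs_spec m xi r s).

(* subspace topology on Z_m^x induced by the m-adic topology
   (basic neighbourhoods x + m^h Z_m) *)
Definition Zm_units_open (m : int) (W : padic -> Prop) : Prop :=
  (forall x, W x -> Zm_unit m x) /\
  forall x, W x -> exists h : nat, forall y, Zm_unit m y ->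
    (exists c, is_Zm m c /\ y = Zm_add m x (Zm_mul m (Zm_of_int m (m ^+ h)) c)) ->
    W y.

(* (Z/mZ)^x x (Z/mZ)^N, encoded as a : nat -> nat with a 0 the (Z/mZ)^x
   coordinate and a (i+1) the i-th coordinate of (Z/mZ)^N; Z/mZ = {0..|m|-1} *)
Definition digit_space (m : int) (a : nat -> nat) : Prop :=
  coprime (a 0) (absz m) /\ forall i, a i < absz m.

(* product topology (discrete factors): basic opens fix finitely many coords *)
Definition digit_open (m : int) (V : (nat -> nat) -> Prop) : Prop :=
  (forall a, V a -> digit_space m a) /\
  forall a, V a -> exists k : nat, forall b, digit_space m b ->
    (forall i, i < k -> b i = a i) -> V b.

Definition homeomorphism (X Y : Type) (openA : (X -> Prop) -> Prop)
  (openB : (Y -> Prop) -> Prop) (A : X -> Prop) (B : Y -> Prop) (f : X -> Y) : Prop :=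
  (forall x, A x -> B (f x)) /\
  (forall x y, A x -> A y -> f x = f y -> x = y) /\
  (forall b, B b -> exists x, A x /\ f x = b) /\
  (forall V : Y -> Prop, (forall b, V b -> B b) ->
     (openB V <-> openA (fun x => A x /\ V (f x)))).

(* Main.v *)
Require Import Defs.
From mathcomp Require Import all_boot all_order all_algebra.
From Stdlib Require Import ZArith Lia Znumtheory FunctionalExtensionality ClassicalEpsilon.
Import GRing.Theory Num.Theory.
Open Scope Z_scope.

Fixpoint Sq (n E : Z) (i : nat) : Z :=
  match i with
  | O => 1
  | S i' => (E * Sq n E i' - (E * Sq n E i') mod Z.abs n) / n
  end.

Definition Rd (n E : Z) (i : nat) : Z :=
  match i with O => 0 | S i' => (E * Sq n E i') mod Z.abs n end.

Definition pw (n : Z) (k : nat) : Z := n ^ Z.of_nat k.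

Lemma pw_add n a b : pw n (a + b) = pw n a * pw n b.
Proof. unfold pw. rewrite Nat2Z.inj_add Z.pow_add_r; lia. Qed.

Lemma pw0 n : pw n 0 = 1. Proof. reflexivity. Qed.
Lemma pw1 n : pw n 1 = n. Proof. unfold pw. simpl. lia. Qed.
Lemma pwS n a : pw n (S a) = n * pw n a.
Proof. unfold pw. rewrite Nat2Z.inj_succ Z.pow_succ_r; lia. Qed.

Lemma divex a b : b <> 0 -> (b | a) -> a = b * (a / b).
Proof. intros Hb Hd. apply Z.div_exact; auto. apply Z.mod_divide; auto. Qed.

Lemma small_eq n a b : 0 <= a < Z.abs n -> 0 <= b < Z.abs n -> (n | a - b) -> a = b.
Proof.
  intros Ha Hb [c Hc].
  destruct (Z.eq_dec c 0). subst; lia.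
  assert (Z.abs (c * n) >= Z.abs n). { rewrite Z.abs_mul. nia. }
  rewrite <- Hc in H. lia.
Qed.

Lemma Rd_bound n E i : n <> 0 -> 0 <= Rd n E (S i) < Z.abs n.
Proof. intros Hn. simpl. apply Z.mod_pos_bound. lia. Qed.

Lemma SR_eq n E i : n <> 0 -> E * Sq n E i = n * Sq n E (S i) + Rd n E (S i).
Proof.
  intros Hn. simpl.
  set (y := E * Sq n E i).
  assert (Hd : (n | y - y mod Z.abs n)).
  { apply Z.divide_abs_l. exists (y / Z.abs n).
    pose proof (Z.div_mod y (Z.abs n)) as H; lia. }
  rewrite <- (divex _ _ Hn Hd). lia.
Qed.

Lemma Rd_eq_of n E F i : n <> 0 -> (n | Rd n F (S i) - Rd n E (S i)) -> Rd n F (S i) = Rd n E (S i).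
Proof. intros Hn H. apply (small_eq n); auto using Rd_bound. Qed.

Lemma pw_ge1_div n k : (1 <= k)%coq_nat -> (n | pw n k).
Proof. intros H. replace k with (S (Nat.pred k)) by lia. rewrite pwS. exists (pw n (Nat.pred k)). lia. Qed.

Lemma digD n E t k : n <> 0 -> (1 <= k)%coq_nat -> forall j, (S j <= k)%coq_nat ->
  (exists w, Sq n (E + pw n k * t) (S j) =
     Sq n E (S j) + pw n (k - S j)%coq_nat * t * E ^ Z.of_nat j + pw n (Nat.add (k - S j)%coq_nat 1) * w)
  /\ (forall i, (i <= j)%coq_nat -> Rd n (E + pw n k * t) (S i) = Rd n E (S i)).
Proof.
  intros Hn Hk. set (X := E + pw n k * t).
  induction j as [|j IH]; intros Hj.
  - pose proof (SR_eq n X 0 Hn) as HX. pose proof (SR_eq n E 0 Hn) as HE.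
    change (Sq n X 0) with 1 in HX. change (Sq n E 0) with 1 in HE.
    assert (Hpk : pw n k = n * pw n (k - 1)%coq_nat).
    { rewrite <- pwS. f_equal. lia. }
    assert (HXE : X = E + n * (pw n (k-1)%coq_nat * t)) by (unfold X; rewrite Hpk; ring).
    assert (HR : Rd n X 1 = Rd n E 1).
    { apply Rd_eq_of; auto.
      exists (pw n (k-1)%coq_nat * t - Sq n X 1 + Sq n E 1). nia. }
    split.
    + exists 0. rewrite Z.mul_0_r Z.add_0_r Z.pow_0_r Z.mul_1_r.
      apply (Z.mul_cancel_l _ _ n); auto. nia.
    + intros i Hi. replace i with 0%nat by lia. exact HR.
  - destruct (IH ltac:(lia)) as [[w Hw] HRs].
    set (a := (k - S (S j))%coq_nat).
    assert (Hka : k = Nat.add (Nat.add a 2) j) by (unfold a; lia).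
    pose proof (SR_eq n X (S j) Hn) as HX. pose proof (SR_eq n E (S j) Hn) as HE.
    assert (Hkey : X * Sq n X (S j) - E * Sq n E (S j) =
      pw n (S a) * t * E ^ Z.of_nat (S j) + pw n (S (S a)) * (E * w + pw n j * t * Sq n X (S j))).
    { replace (Nat.add (k - S j)%coq_nat 1) with (S (S a)) in Hw by (unfold a; lia).
      replace (k - S j)%coq_nat with (S a) in Hw by (unfold a; lia).
      rewrite Hw. unfold X. rewrite Hka. rewrite !pw_add.
      rewrite Nat2Z.inj_succ Z.pow_succ_r; [|lia].
      replace (pw n 2) with (n * n) by (unfold pw; simpl; lia).
      rewrite !pwS. ring. }
    assert (HR : Rd n X (S (S j)) = Rd n E (S (S j))).
    { apply Rd_eq_of; auto.
      exists (Sq n E (S (S j)) - Sq n X (S (S j)) + pw n a * t * E ^ Z.of_nat (S j)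
              + n * pw n a * (E * w + pw n j * t * Sq n X (S j))).
      rewrite !pwS in Hkey. nia. }
    split.
    + exists (E * w + pw n j * t * Sq n X (S j)).
      replace (Nat.add a 1) with (S a) by lia.
      fold a.
      apply (Z.mul_cancel_l _ _ n); auto.
      rewrite !pwS in Hkey |- *. rewrite HR in HX. lia.
    + intros i Hi. destruct (Nat.eq_dec i (S j)) as [->|]; [exact HR|]. apply HRs. lia.
Qed.

Lemma digNext n E t k : n <> 0 -> (1 <= k)%coq_nat ->
  (n | Rd n (E + pw n k * t) (S k) - Rd n E (S k) - t * E ^ Z.of_nat k).
Proof.
  intros Hn Hk. set (X := E + pw n k * t).
  destruct (digD n E t k Hn Hk (k - 1)%coq_nat ltac:(lia)) as [[w Hw] _].
  replace (S (k - 1)%coq_nat) with k in Hw by lia.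
  replace (k - k)%coq_nat with 0%nat in Hw by lia.
  replace (Nat.add 0 1) with 1%nat in Hw by lia.
  fold X in Hw. rewrite pw0 pw1 in Hw.
  pose proof (SR_eq n X k Hn) as HX. pose proof (SR_eq n E k Hn) as HE.
  assert (Hpk : pw n k = n * pw n (k - 1)%coq_nat).
  { rewrite <- pwS. f_equal. lia. }
  assert (HEk : E ^ Z.of_nat k = E * E ^ Z.of_nat (k - 1)%coq_nat).
  { rewrite <- Z.pow_succ_r by lia. f_equal. lia. }
  exists (Sq n E (S k) - Sq n X (S k) + E * w + pw n (k-1)%coq_nat * t * Sq n X k).
  assert (X * Sq n X k = E * Sq n E k + t * E ^ Z.of_nat k + n * (E * w + pw n (k-1)%coq_nat * t * Sq n X k)).
  { rewrite Hw. unfold X. rewrite Hpk HEk. ring. }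
  lia.
Qed.

Lemma locA n E F k : n <> 0 -> (pw n k | F - E) ->
  (forall i, (i <= k)%coq_nat -> (pw n (k - i)%coq_nat | Sq n F i - Sq n E i)) /\
  (forall i, (i < k)%coq_nat -> Rd n F (S i) = Rd n E (S i)).
Proof.
  intros Hn [t Ht].
  assert (HF : F = E + pw n k * t) by lia. subst F.
  destruct (Nat.eq_dec k 0) as [->|Hk].
  { split; intros i Hi. replace i with 0%nat by lia. simpl. exists 0. lia. lia. }
  split.
  - intros [|j] Hj. simpl. exists 0. lia.
    destruct (digD n E t k Hn ltac:(lia) j Hj) as [[w Hw] _].
    rewrite Hw. exists (t * E ^ Z.of_nat j + n * w).
    replace (Nat.add (k - S j)%coq_nat 1) with (S (k - S j)%coq_nat) by lia.
    rewrite pwS. ring.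
  - intros i Hi. destruct (digD n E t k Hn ltac:(lia) (k - 1)%coq_nat ltac:(lia)) as [_ HR].
    apply HR. lia.
Qed.

Lemma gcd_pow1 E n k : Z.gcd E n = 1 -> Z.gcd (E ^ Z.of_nat k) n = 1.
Proof.
  intros H. apply Zgcd_1_rel_prime. apply rel_prime_sym.
  induction k as [|k IH].
  - simpl. apply rel_prime_sym, rel_prime_1.
  - rewrite Nat2Z.inj_succ Z.pow_succ_r; [|lia]. apply rel_prime_mult; auto.
    apply rel_prime_sym. apply Zgcd_1_rel_prime. auto.
Qed.

Lemma uniqU n E F k : n <> 0 -> Z.gcd E n = 1 ->
  (forall i, (i < k)%coq_nat -> Rd n F (S i) = Rd n E (S i)) -> (pw n k | F - E).
Proof.
  intros Hn Hg. induction k as [|k IH]; intros HR.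
  - rewrite pw0. apply Z.divide_1_l.
  - destruct (IH ltac:(intros; apply HR; lia)) as [t Ht].
    destruct (Nat.eq_dec k 0) as [->|Hk].
    + pose proof (SR_eq n F 0 Hn) as H1. pose proof (SR_eq n E 0 Hn) as H2.
      change (Sq n F 0) with 1 in H1. change (Sq n E 0) with 1 in H2.
      rewrite (HR 0%nat ltac:(lia)) in H1. rewrite pw1.
      exists (Sq n F 1 - Sq n E 1). lia.
    + assert (HF : F = E + pw n k * t) by lia.
      pose proof (digNext n E t k Hn ltac:(lia)) as HN. rewrite <- HF in HN.
      rewrite (HR k ltac:(lia)) in HN.
      replace (Rd n E (S k) - Rd n E (S k) - t * E ^ Z.of_nat k) with (- (E ^ Z.of_nat k * t)) in HN by ring.
      assert (HN' : (n | E ^ Z.of_nat k * t)) by (destruct HN as [c Hc]; exists (-c); lia). clear HN. rename HN' into HN.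
      apply Z.gauss in HN; [| rewrite Z.gcd_comm; apply gcd_pow1; auto].
      destruct HN as [s Hs]. exists s. rewrite pwS. lia.
Qed.

Lemma existX n (rho : nat -> Z) : n <> 0 -> (forall i, 0 <= rho i < Z.abs n) -> Z.gcd (rho 0%nat) n = 1 ->
  forall k, exists E, Z.gcd E n = 1 /\ forall i, (i < k)%coq_nat -> Rd n E (S i) = rho i.
Proof.
  intros Hn Hr Hg k. induction k as [|k [E [HgE HE]]].
  - exists (rho 0%nat). split; auto. intros; lia.
  - destruct (Nat.eq_dec k 0) as [->|Hk].
    + exists (rho 0%nat). split; auto. intros i Hi. replace i with 0%nat by lia.
      simpl. rewrite Z.mul_1_r. apply Z.mod_small. apply Hr.
    + pose proof (Z.gcd_bezout _ _ _ (gcd_pow1 E n k HgE)) as [u [v Huv]].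
      set (t := (rho k - Rd n E (S k)) * u).
      exists (E + pw n k * t).
      assert (Hpk : pw n k = n * pw n (k - 1)%coq_nat).
      { rewrite <- pwS. f_equal. lia. }
      split.
      * rewrite Z.gcd_comm Hpk.
        replace (E + n * pw n (k - 1)%coq_nat * t) with (E + (pw n (k - 1)%coq_nat * t) * n) by ring.
        rewrite Z.gcd_add_mult_diag_r Z.gcd_comm. auto.
      * intros i Hi.
        destruct (Nat.eq_dec i k) as [->|Hik].
        -- pose proof (digNext n E t k Hn ltac:(lia)) as [c Hc].
           apply (small_eq n); [apply Rd_bound; auto | apply Hr |].
           exists (c - (rho k - Rd n E (S k)) * v).
           assert (Ht : t * E ^ Z.of_nat k = (rho k - Rd n E (S k)) * (u * E ^ Z.of_nat k)) by (unfold t; ring).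
           replace (u * E ^ Z.of_nat k) with (1 - v * n) in Ht by lia. lia.
        -- destruct (locA n E (E + pw n k * t) k Hn) as [_ HR].
           { exists t. ring. }
           rewrite HR; [|lia]. apply HE. lia.
Qed.

Lemma reduce d n E : 0 < d -> n <> 0 -> forall i,
  Sq (d * n) (d * E) i = Sq n E i /\ Rd (d * n) (d * E) i = d * Rd n E i.
Proof.
  intros Hd Hn i. induction i as [|i [IHs IHr]].
  - simpl. lia.
  - assert (Hdn : d * n <> 0) by nia.
    pose proof (SR_eq (d * n) (d * E) i Hdn) as H1. pose proof (SR_eq n E i Hn) as H2.
    rewrite IHs in H1.
    assert (HR : Rd (d * n) (d * E) (S i) = d * Rd n E (S i)).
    { apply (small_eq (d * n)).
      - apply Rd_bound; auto.
      - pose proof (Rd_bound n E i Hn). rewrite Z.abs_mul. rewrite (Z.abs_eq d); nia.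
      - exists (Sq n E (S i) - Sq (d * n) (d * E) (S i)). nia. }
    split; auto. rewrite HR in H1.
    apply (Z.mul_cancel_l _ _ (d * n)); auto. nia.
Qed.

Close Scope Z_scope.

Definition toZ (z : int) : Z :=
  match z with Posz n => Z.of_nat n | Negz n => (- Z.of_nat n - 1)%Z end.

Lemma toZ_add (x y : int) : toZ (x + y)%R = (toZ x + toZ y)%Z.
Proof.
  have -> : (x + y)%R = intZmod.addz x y by [].
  case: x => a; case: y => b; rewrite /intZmod.addz /=.
  all: try (rewrite -?plusE; lia).
  all: case: ltnP => /= H; rewrite -?minusE; move/leP: H => H; lia.
Qed.

Lemma toZ_opp (x : int) : toZ (- x)%R = (- toZ x)%Z.
Proof.
  have -> : (- x)%R = intZmod.oppz x by [].
  case: x => [[|a]|a] /=; lia.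
Qed.

Lemma toZ_mul (x y : int) : toZ (x * y)%R = (toZ x * toZ y)%Z.
Proof.
  have -> : (x * y)%R = intRing.mulz x y by [].
  case: x => a; case: y => b; rewrite /intRing.mulz /=; rewrite -?multE -?plusE.
  all: rewrite ?toZ_opp /= ?Zpos_P_of_succ_nat; nia.
Qed.

Lemma toZ_nat (n : nat) : toZ n = Z.of_nat n. Proof. by []. Qed.

Lemma toZ_inj (x y : int) : toZ x = toZ y -> x = y.
Proof. case: x => a; case: y => b /= H; f_equal; lia. Qed.

Lemma toZ_exp (x : int) (k : nat) : toZ (x ^+ k)%R = (toZ x ^ Z.of_nat k)%Z.
Proof.
  elim: k => [|k IH]; first by [].
  rewrite exprS toZ_mul IH Nat2Z.inj_succ Z.pow_succ_r; lia.
Qed.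

Lemma toZ_absz (x : int) : Z.of_nat (absz x) = Z.abs (toZ x).
Proof. case: x => a /=; lia. Qed.

Lemma toZ_ge0 (x : int) : (0 <= x)%R -> toZ x = Z.of_nat (absz x).
Proof. by case: x. Qed.

Lemma ZofN_add (a b : nat) : Z.of_nat (a + b) = (Z.of_nat a + Z.of_nat b)%Z.
Proof. rewrite -plusE; lia. Qed.
Lemma ZofN_mul (a b : nat) : Z.of_nat (a * b) = (Z.of_nat a * Z.of_nat b)%Z.
Proof. rewrite -multE; lia. Qed.
Lemma ZofN_exp (a b : nat) : Z.of_nat (expn a b) = (Z.of_nat a ^ Z.of_nat b)%Z.
Proof.
  elim: b => [|b IH]; first by [].
  rewrite expnS ZofN_mul IH Nat2Z.inj_succ Z.pow_succ_r; lia.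
Qed.

Lemma ZofN_mod (a b : nat) : (0 < b)%nat -> Z.of_nat (a %% b) = (Z.of_nat a mod Z.of_nat b)%Z.
Proof.
  move=> Hb. apply: (Z.mod_unique _ _ (Z.of_nat (a %/ b))).
  - left. split; first lia. have := ltn_pmod a Hb => /ltP; lia.
  - rewrite {1}(divn_eq a b) ZofN_add ZofN_mul. lia.
Qed.

Lemma toZ_modz (a : int) (P : nat) : (0 < P)%nat ->
  toZ (modz a (Posz P)) = (toZ a mod Z.of_nat P)%Z.
Proof.
  move=> HP. have HP' : (Posz P != 0)%R by case: P HP.
  apply: (Z.mod_unique _ _ (toZ (divz a (Posz P)))).
  - left. have h0 := modz_ge0 a HP'. have h1 := ltz_mod a HP'.
    move: (modz a (Posz P)) h0 h1 => r. case: r => // r _ /=. rewrite ger0_norm // ltz_nat => /ltP. lia.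
  - rewrite {1}(divz_eq a (Posz P)) toZ_add toZ_mul toZ_nat. lia.
Qed.



Lemma dvdn_Z (a b : nat) : (a %| b)%nat -> (Z.of_nat a | Z.of_nat b)%Z.
Proof. move/dvdnP => [k ->]. exists (Z.of_nat k). by rewrite ZofN_mul. Qed.

Lemma Z_dvdn (a b : nat) : (Z.of_nat a | Z.of_nat b)%Z -> (a %| b)%nat.
Proof.
  case: a => [|a] H.
  - destruct H as [c Hc]. have -> : b = 0%nat by lia. by [].
  - rewrite /dvdn. apply/eqP. apply: Nat2Z.inj. rewrite ZofN_mod //.
    apply/Z.mod_divide => //.
Qed.

Lemma gcdn_Z (a b : nat) : Z.of_nat (gcdn a b) = Z.gcd (Z.of_nat a) (Z.of_nat b).
Proof.
  symmetry. apply: Z.gcd_unique; first lia.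
  - apply: dvdn_Z. exact: dvdn_gcdl.
  - apply: dvdn_Z. exact: dvdn_gcdr.
  - move=> q Ha Hb. apply/Z.divide_abs_l. rewrite -(Nat2Z.inj_abs_nat q).
    apply: dvdn_Z. rewrite dvdn_gcd. apply/andP; split; apply: Z_dvdn;
    rewrite Nat2Z.inj_abs_nat; apply/Z.divide_abs_l; assumption.
Qed.

Lemma coprime_Z (a b : nat) : coprime a b <-> Z.gcd (Z.of_nat a) (Z.of_nat b) = 1%Z.
Proof.
  rewrite /coprime -gcdn_Z. split; first by move/eqP => ->.
  move=> H. apply/eqP. lia.
Qed.

Open Scope Z_scope.

Definition xz (x : padic) (h : nat) : Z := Z.of_nat (x h).
Definition PP (m : int) (h : nat) : Z := Z.abs (toZ m) ^ Z.of_nat h.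

Lemma mz_neq0 (m : int) : (m != 0)%R -> toZ m <> 0.
Proof. move=> Hm H. move: Hm. have -> : m = 0%R by apply: toZ_inj; rewrite H. by rewrite eqxx. Qed.

Lemma PP_pos m h : (m != 0)%R -> 0 < PP m h.
Proof. move=> /mz_neq0 H. rewrite /PP. apply: Z.pow_pos_nonneg; lia. Qed.

Lemma PP_nat m h : Z.of_nat (expn (absz m) h) = PP m h.
Proof. by rewrite ZofN_exp toZ_absz. Qed.

Lemma PP_add m a b : PP m (Nat.add a b) = PP m a * PP m b.
Proof. rewrite /PP Nat2Z.inj_add Z.pow_add_r; lia. Qed.

Lemma PP_S m h : PP m (S h) = Z.abs (toZ m) * PP m h.
Proof. rewrite /PP Nat2Z.inj_succ Z.pow_succ_r; lia. Qed.

Lemma PP_pw m h x : (PP m h | x) <-> (pw (toZ m) h | x).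
Proof. rewrite /PP /pw -Z.abs_pow. apply: Z.divide_abs_l. Qed.

Lemma PP_le m a b : (a <= b)%coq_nat -> (PP m a | PP m b).
Proof. move=> H. have -> : b = Nat.add a (b - a)%coq_nat by lia. rewrite PP_add. by exists (PP m (b - a)%coq_nat); ring. Qed.

Lemma mod_dvd P a : P <> 0 -> (P | a mod P - a).
Proof. move=> H. exists (- (a / P)). have := Z.div_mod a P H. lia. Qed.

Lemma dvd_small P a b : 0 <= a < P -> 0 <= b < P -> (P | a - b) -> a = b.
Proof. move=> Ha Hb H. apply: (small_eq P) => //; lia. Qed.

Lemma is_ZmE m x : (m != 0)%R -> (is_Zm m x <-> forall h, (0 <= xz x h < PP m h) /\ (PP m h | xz x (S h) - xz x h)).
Proof.
  move=> Hm. have HP := PP_pos m _ Hm. split.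
  - move=> H h. case: (H h) => H1 H2. split.
    + move/ltP: H1 => H1. rewrite /xz -PP_nat. lia.
    + have HM : (0 < expn (absz m) h)%nat by rewrite expn_gt0 absz_gt0 Hm.
      rewrite /xz -H2 ZofN_mod //.
      rewrite PP_nat. apply/Z.divide_opp_r. rewrite Z.opp_sub_distr Z.add_comm. apply: mod_dvd. have := HP h. lia.
  - move=> H h. case: (H h) => H1 H2. split.
    + apply/ltP. rewrite /xz -PP_nat in H1. lia.
    + have HM : (0 < expn (absz m) h)%nat by rewrite expn_gt0 absz_gt0 Hm.
      apply: Nat2Z.inj. rewrite ZofN_mod //.
      rewrite PP_nat. symmetry. case: H2 => c Hc. apply: (Z.mod_unique _ _ c).
      * left. exact: H1.
      * rewrite /xz in Hc. lia.
Qed.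

Lemma compat m x h l : (m != 0)%R -> is_Zm m x -> (h <= l)%coq_nat -> (PP m h | xz x l - xz x h).
Proof.
  move=> Hm /(is_ZmE _ _ Hm) H Hl. have -> : l = Nat.add h (l - h)%coq_nat by lia.
  elim: (l - h)%coq_nat => [|j IH].
  - rewrite Nat.add_0_r. exists 0. lia.
  - rewrite Nat.add_succ_r. case: (H (Nat.add h j)) => _ H2.
    replace (xz x (S (Nat.add h j)) - xz x h) with ((xz x (S (Nat.add h j)) - xz x (Nat.add h j)) + (xz x (Nat.add h j) - xz x h)) by ring.
    apply: Z.divide_add_r => //. apply: Z.divide_trans H2. apply: PP_le. lia.
Qed.

Lemma ext m x y : (m != 0)%R -> (forall h, 0 <= xz x h < PP m h) -> (forall h, 0 <= xz y h < PP m h) ->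
  (forall h, (PP m h | xz x h - xz y h)) -> x = y.
Proof.
  move=> Hm Hx Hy H. apply: (@functional_extensionality nat nat) => h. apply: Nat2Z.inj.
  exact: (dvd_small (PP m h) (xz x h) (xz y h) (Hx h) (Hy h) (H h)).
Qed.

Lemma is_Zm_range m x h : (m != 0)%R -> is_Zm m x -> 0 <= xz x h < PP m h.
Proof. move=> Hm /(is_ZmE _ _ Hm) H. exact: (proj1 (H h)). Qed.

Lemma HMpos m h : (m != 0)%R -> (0 < expn (absz m) h)%nat.
Proof. move=> Hm. by rewrite expn_gt0 absz_gt0 Hm. Qed.

Lemma lv_mul m x y h : (m != 0)%R -> xz (Zm_mul m x y) h = (xz x h * xz y h) mod PP m h.
Proof. move=> Hm. by rewrite /xz /Zm_mul ZofN_mod ?HMpos // ZofN_mul PP_nat. Qed.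

Lemma lv_add m x y h : (m != 0)%R -> xz (Zm_add m x y) h = (xz x h + xz y h) mod PP m h.
Proof. move=> Hm. by rewrite /xz /Zm_add ZofN_mod ?HMpos // ZofN_add PP_nat. Qed.

Lemma lv_int m z h : (m != 0)%R -> xz (Zm_of_int m z) h = toZ z mod PP m h.
Proof.
  move=> Hm. rewrite /xz /Zm_of_int toZ_absz.
  rewrite toZ_modz ?HMpos // PP_nat. apply: Z.abs_eq. have := Z.mod_pos_bound (toZ z) (PP m h) (PP_pos m h Hm); lia.
Qed.

Lemma lv_proj n x h : (n != 0)%R -> xz (Zm_proj n x) h = xz x h mod PP n h.
Proof. move=> Hn. by rewrite /xz /Zm_proj ZofN_mod ?HMpos // PP_nat. Qed.

Lemma mod_range m a h : (m != 0)%R -> 0 <= a mod PP m h < PP m h.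
Proof. move=> Hm. apply: Z.mod_pos_bound. exact: PP_pos. Qed.

Lemma modc P a : P <> 0 -> (P | a mod P - a).
Proof. exact: mod_dvd. Qed.

Definition mkZm (m : int) (A : nat -> Z) : padic := fun h => Z.to_nat (A h mod PP m h).

Lemma lv_mk m A h : (m != 0)%R -> xz (mkZm m A) h = A h mod PP m h.
Proof. move=> Hm. rewrite /xz /mkZm Z2Nat.id //. exact: (proj1 (mod_range m (A h) h Hm)). Qed.

Lemma mk_is_Zm m A : (m != 0)%R -> (forall h, (PP m h | A (S h) - A h)) -> is_Zm m (mkZm m A).
Proof.
  move=> Hm H. apply/(is_ZmE _ _ Hm) => h. rewrite !lv_mk //. split; first exact: mod_range.
  have HP := PP_pos m h Hm. have HP1 := PP_pos m (S h) Hm.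
  replace (A (S h) mod PP m (S h) - A h mod PP m h) with
    ((A (S h) mod PP m (S h) - A (S h)) + (A (S h) - A h) - (A h mod PP m h - A h)) by ring.
  apply: Z.divide_sub_r; [apply: Z.divide_add_r|].
  - apply: Z.divide_trans (modc _ _ _); [apply: PP_le; lia | lia].
  - exact: H.
  - apply: modc. lia.
Qed.

Lemma int_is_Zm m z : (m != 0)%R -> is_Zm m (Zm_of_int m z).
Proof.
  move=> Hm. apply/(is_ZmE _ _ Hm) => h. rewrite !lv_int //. split; first exact: mod_range.
  have HP := PP_pos m h Hm. have HP1 := PP_pos m (S h) Hm.
  replace (toZ z mod PP m (S h) - toZ z mod PP m h) with
    ((toZ z mod PP m (S h) - toZ z) - (toZ z mod PP m h - toZ z)) by ring.
  apply: Z.divide_sub_r.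
  - apply: Z.divide_trans (modc _ _ _); [apply: PP_le; lia | lia].
  - apply: modc. lia.
Qed.

Definition cong (P a b : Z) := (P | a - b).

Lemma cong_refl P a : cong P a a. Proof. exists 0. lia. Qed.
Lemma cong_sym P a b : cong P a b -> cong P b a.
Proof. move=> [c Hc]. exists (-c). lia. Qed.
Lemma cong_trans P a b c : cong P a b -> cong P b c -> cong P a c.
Proof. move=> H1 H2. rewrite /cong. replace (a - c) with ((a - b) + (b - c)) by ring. exact: Z.divide_add_r. Qed.
Lemma cong_add P a b c d : cong P a b -> cong P c d -> cong P (a + c) (b + d).
Proof. move=> H1 H2. rewrite /cong. replace (a + c - (b + d)) with ((a - b) + (c - d)) by ring. exact: Z.divide_add_r. Qed.
Lemma cong_mul P a b c d : cong P a b -> cong P c d -> cong P (a * c) (b * d).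
Proof.
  move=> H1 H2. rewrite /cong. replace (a * c - b * d) with ((a - b) * c + b * (c - d)) by ring.
  apply: Z.divide_add_r; [exact: Z.divide_mul_l | exact: Z.divide_mul_r].
Qed.
Lemma cong_mod P a : P <> 0 -> cong P (a mod P) a.
Proof. exact: mod_dvd. Qed.
Lemma cong_weak P Q a b : (Q | P) -> cong P a b -> cong Q a b.
Proof. move=> H1 H2. exact: Z.divide_trans H1 H2. Qed.
Lemma cong_eq P a b : a = b -> cong P a b.
Proof. move=> ->. exact: cong_refl. Qed.
Lemma cong_1 a b : cong 1 a b.
Proof. exact: Z.divide_1_l. Qed.

Lemma PP0 m : PP m 0 = 1. Proof. by []. Qed.

Lemma PPm_dvd m h : (toZ m | PP m (S h)).
Proof. rewrite PP_S. apply (proj1 (Z.divide_abs_l _ _)). exists (PP m h); ring. Qed.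

Lemma cancel_m m h y : (m != 0)%R -> (PP m (S h) | toZ m * y) -> (PP m h | y).
Proof.
  move=> Hm H. have Hz := mz_neq0 m Hm. rewrite PP_S in H.
  apply (proj1 (Z.mul_divide_cancel_l _ _ (Z.abs (toZ m)) ltac:(lia))).
  apply (proj1 (Z.divide_abs_r _ _)). rewrite Z.abs_mul Z.abs_involutive -Z.abs_mul.
  apply (proj2 (Z.divide_abs_r _ _)). exact: H.
Qed.

Lemma mulm_dvd m h y : (PP m h | y) -> (PP m (S h) | toZ m * y).
Proof.
  move=> [c Hc]. rewrite PP_S Hc. apply (proj1 (Z.divide_abs_r _ _)). rewrite Z.abs_mul.
  have HP : 0 <= PP m h by rewrite /PP; apply: Z.pow_nonneg; lia.
  exists (Z.abs c). rewrite !Z.abs_mul (Z.abs_eq (PP m h) HP). ring.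
Qed.

Lemma is_Zm_compat m x h l : (m != 0)%R -> is_Zm m x -> (h <= l)%coq_nat -> cong (PP m h) (xz x l) (xz x h).
Proof. exact: compat. Qed.

Lemma locA_P m E F k : (m != 0)%R -> cong (PP m k) F E ->
  (forall i, (i <= k)%coq_nat -> cong (PP m (k - i)%coq_nat) (Sq (toZ m) F i) (Sq (toZ m) E i)) /\
  (forall i, (i < k)%coq_nat -> Rd (toZ m) F (S i) = Rd (toZ m) E (S i)).
Proof.
  move=> Hm H. have Hz := mz_neq0 m Hm. move/PP_pw: H => H.
  case: (locA _ _ _ _ Hz H) => H1 H2. split => // i Hi. apply/PP_pw. exact: H1.
Qed.

Lemma lv_one m h : (m != 0)%R -> cong (PP m h) (xz (Zm_one m) h) 1.
Proof. move=> Hm. rewrite /Zm_one lv_int //. apply: cong_mod. have := PP_pos m h Hm. lia. Qed.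

Lemma rs_unique m xi r s : (m != 0)%R -> is_Zm m xi -> rs_spec m xi r s ->
  forall i, (forall h, cong (PP m h) (xz (s i) h) (Sq (toZ m) (xz xi (Nat.add h i)) i)) /\
            Z.of_nat (r (S i)) = Rd (toZ m) (xz xi (S i)) (S i).
Proof.
  move=> Hm Hxi [Hr0 [Hs0 Hrs]]. have Hz := mz_neq0 m Hm.
  have HPne h : PP m h <> 0 by have := PP_pos m h Hm; lia.
  have step : forall i, (forall h, cong (PP m h) (xz (s i) h) (Sq (toZ m) (xz xi (Nat.add h i)) i)) ->
     forall h, Z.of_nat (r (S i)) = Rd (toZ m) (xz xi (Nat.add (S h) i)) (S i) /\
       cong (PP m h) (xz (s (S i)) (S h)) (Sq (toZ m) (xz xi (Nat.add (S h) i)) (S i)).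
  { move=> i IH h. case: (Hrs (S i) isT) => Hrlt [Hsi Heq]. simpl in Heq.
    set X := xz xi (Nat.add (S h) i).
    have HL : cong (PP m (S h)) (X * Sq (toZ m) X i) (toZ m * xz (s (S i)) (S h) + Z.of_nat (r (S i))).
    { have E1 := congr1 (fun f => xz f (S h)) Heq. simpl in E1.
      rewrite lv_mul // lv_add // lv_mul // !lv_int // toZ_nat in E1.
      apply: cong_trans.
      { apply: cong_mul. apply: is_Zm_compat => //; lia. apply: cong_sym. exact: IH. }
      apply: cong_trans. apply: cong_sym. apply: cong_mod. exact: HPne.
      rewrite E1. apply: cong_trans. apply: cong_mod. exact: HPne.
      apply: cong_add; last by apply: cong_mod.
      apply: cong_trans. apply: cong_mod. exact: HPne.
      apply: cong_mul; last by apply: cong_refl. apply: cong_mod. exact: HPne. }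
    have HS := SR_eq (toZ m) X i Hz. rewrite HS in HL.
    have HR : Z.of_nat (r (S i)) = Rd (toZ m) X (S i).
    { apply: (small_eq (toZ m)).
      - split; first lia. move/ltP: Hrlt. rewrite -toZ_absz. lia.
      - exact: Rd_bound.
      - have := cong_weak _ _ _ _ (PPm_dvd m h) HL. rewrite /cong => H.
        replace (Z.of_nat (r (S i)) - Rd (toZ m) X (S i)) with
          (- (toZ m * Sq (toZ m) X (S i) + Rd (toZ m) X (S i) - (toZ m * xz (s (S i)) (S h) + Z.of_nat (r (S i)))) - toZ m * (xz (s (S i)) (S h) - Sq (toZ m) X (S i))) by ring.
        apply: Z.divide_sub_r. exact: (proj2 (Z.divide_opp_r _ _) H). exact: Z.divide_factor_l. }
    split => //. apply: cancel_m => //. rewrite /cong in HL.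
    replace (toZ m * (xz (s (S i)) (S h) - Sq (toZ m) X (S i))) with
      (- (toZ m * Sq (toZ m) X (S i) + Rd (toZ m) X (S i) - (toZ m * xz (s (S i)) (S h) + Z.of_nat (r (S i))))) by (rewrite HR; ring).
    exact: (proj2 (Z.divide_opp_r _ _) HL). }
  have main : forall i, forall h, cong (PP m h) (xz (s i) h) (Sq (toZ m) (xz xi (Nat.add h i)) i).
  { elim => [|i IH] h.
    - rewrite Hs0. exact: lv_one.
    - case: (step i IH h) => _ H. case: (Hrs (S i) isT) => _ [Hsi _].
      apply: cong_trans (cong_sym _ _ _ (is_Zm_compat m _ h (S h) Hm Hsi (Nat.le_succ_diag_r h))) _.
      rewrite Nat.add_succ_r -Nat.add_succ_l. exact: H. }
  move=> i. split; first exact: main.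
  case: (step i (main i) 0%nat) => -> _. by [].
Qed.

Lemma rs_exist m xi : (m != 0)%R -> is_Zm m xi -> exists r s, rs_spec m xi r s.
Proof.
  move=> Hm Hxi. have Hz := mz_neq0 m Hm.
  have HPne h : PP m h <> 0 by have := PP_pos m h Hm; lia.
  set sf := fun i => match i with O => Zm_one m | S _ => mkZm m (fun h => Sq (toZ m) (xz xi (Nat.add h i)) i) end.
  set rf := fun i => Z.to_nat (Rd (toZ m) (xz xi i) i).
  have Hsf : forall j h, cong (PP m h) (xz (sf j) h) (Sq (toZ m) (xz xi (Nat.add h j)) j).
  { case => [|j] h. exact: lv_one. rewrite /sf lv_mk //. exact: cong_mod. }
  have Hsz : forall j, is_Zm m (sf (S j)).
  { move=> j. apply: mk_is_Zm => // h.
    case: (locA_P m (xz xi (Nat.add h (S j))) (xz xi (Nat.add (S h) (S j))) (Nat.add h (S j)) Hm) => [|H1 _].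
    { apply: is_Zm_compat => //. lia. }
    have := H1 (S j) ltac:(lia). by have -> : (Nat.add h (S j) - S j)%coq_nat = h by lia. }
  have Hrf : forall j, Z.of_nat (rf (S j)) = Rd (toZ m) (xz xi (S j)) (S j).
  { move=> j. rewrite /rf Z2Nat.id //. exact: (proj1 (Rd_bound _ _ j Hz)). }
  exists rf, sf. split; first by []. split; first by [].
  case => [|j] // _. split.
  { apply/ltP. have := Hrf j. have := Rd_bound (toZ m) (xz xi (S j)) j Hz. rewrite -toZ_absz. lia. }
  split; first exact: Hsz.
  apply: (ext m) => // h; rewrite ?lv_mul ?lv_add //; try exact: mod_range.
  case: h => [|h]; first exact: cong_1.
  set X := xz xi (Nat.add (S h) j).
  apply: cong_trans. apply: cong_mod. exact: HPne.
  apply: cong_trans (cong_mul _ _ _ _ _ (cong_sym _ _ _ (is_Zm_compat m xi (S h) (Nat.add (S h) j) Hm Hxi ltac:(lia))) (Hsf j (S h))) _.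
  fold X. rewrite (SR_eq _ _ _ Hz).
  apply: cong_sym. apply: cong_trans. apply: cong_mod. exact: HPne.
  apply: cong_add.
  - rewrite lv_mul // lv_int //. apply: cong_trans. apply: cong_mod. exact: HPne.
    apply: cong_trans (cong_mul _ _ _ _ _ (cong_mod _ (toZ m) (HPne (S h))) (Hsf (S j) (S h))) _.
    case: (locA_P m X (xz xi (Nat.add (S h) (S j))) (Nat.add (S h) j) Hm) => [|H1 _].
    { apply: is_Zm_compat => //. lia. }
    have := H1 (S j) ltac:(lia). have -> : (Nat.add (S h) j - S j)%coq_nat = h by lia.
    move=> H2. rewrite /cong -Z.mul_sub_distr_l. apply: mulm_dvd. exact: H2.
  - rewrite lv_int // toZ_nat Hrf. apply: cong_trans. apply: cong_mod. exact: HPne.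
    case: (locA_P m (xz xi (S j)) X (S j) Hm) => [|_ H2].
    { apply: is_Zm_compat => //. lia. }
    rewrite (H2 j ltac:(lia)). exact: cong_refl.
Qed.

Lemma Zm_r_val m xi i : (m != 0)%R -> is_Zm m xi ->
  Z.of_nat (Zm_r m xi (S i)) = Rd (toZ m) (xz xi (S i)) (S i).
Proof.
  move=> Hm Hxi. have [s Hs] : exists s, rs_spec m xi (Zm_r m xi) s.
  { rewrite /Zm_r. apply: (epsilon_spec (inhabits (fun _ => 0%nat)) (fun r => exists s, rs_spec m xi r s)).
    exact: rs_exist. }
  exact: (proj2 (rs_unique m xi _ _ Hm Hxi Hs i)).
Qed.

Lemma rdlev m xi i h : (m != 0)%R -> is_Zm m xi -> (S i <= h)%coq_nat ->
  Rd (toZ m) (xz xi h) (S i) = Z.of_nat (Zm_r m xi (S i)).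
Proof.
  move=> Hm Hxi Hh. rewrite Zm_r_val //.
  case: (locA_P m (xz xi (S i)) (xz xi h) (S i) Hm) => [|_ H2].
  { exact: is_Zm_compat. }
  apply: H2. lia.
Qed.

Lemma PP1 m : PP m 1 = Z.abs (toZ m). Proof. rewrite /PP /=. lia. Qed.

Lemma gcd_lev m x h : (m != 0)%R -> is_Zm m x -> (1 <= h)%coq_nat ->
  Z.gcd (xz x h) (toZ m) = Z.gcd (xz x 1) (toZ m).
Proof.
  move=> Hm Hx Hh. have := is_Zm_compat m x 1 h Hm Hx Hh. rewrite /cong PP1 => /Z.divide_abs_l [c Hc].
  have -> : xz x h = xz x 1 + c * toZ m by lia.
  by rewrite Z.gcd_comm Z.gcd_add_mult_diag_r Z.gcd_comm.
Qed.

Lemma Zm_r1 m xi : (m != 0)%R -> is_Zm m xi -> Zm_r m xi 1 = xi 1%nat.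
Proof.
  move=> Hm Hxi. apply: Nat2Z.inj. rewrite (Zm_r_val m xi 0) //=. rewrite Z.mul_1_r.
  apply: Z.mod_small. have := is_Zm_range m xi 1 Hm Hxi. by rewrite PP1.
Qed.

Lemma unit_gcd m x : (m != 0)%R -> Zm_unit m x -> Z.gcd (xz x 1) (toZ m) = 1.
Proof.
  move=> Hm [Hx [y [Hy Hxy]]]. have E1 := congr1 (fun f => xz f 1%nat) Hxy. simpl in E1.
  rewrite lv_mul // /Zm_one lv_int // PP1 in E1.
  have Hz := mz_neq0 m Hm.
  change (toZ 1%R) with 1 in E1.
  have h1 := Z.div_mod (xz x 1 * xz y 1) (Z.abs (toZ m)) ltac:(lia).
  have h2 := Z.div_mod 1 (Z.abs (toZ m)) ltac:(lia).
  rewrite -Z.gcd_abs_r. apply: Z.bezout_1_gcd.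
  exists (xz y 1), (- ((xz x 1 * xz y 1) / Z.abs (toZ m) - 1 / Z.abs (toZ m))). lia.
Qed.

Lemma gcd_PP m x h : (m != 0)%R -> is_Zm m x -> Z.gcd (xz x 1) (toZ m) = 1 -> Z.gcd (xz x h) (PP m h) = 1.
Proof.
  move=> Hm Hx Hg. case: h => [|h]; first by rewrite PP0 Z.gcd_1_r.
  rewrite /PP Z.gcd_comm. apply: gcd_pow1. rewrite Z.gcd_comm Z.gcd_abs_r gcd_lev //. lia.
Qed.

Lemma gcd_unit m x : (m != 0)%R -> is_Zm m x -> Z.gcd (xz x 1) (toZ m) = 1 -> Zm_unit m x.
Proof.
  move=> Hm Hx Hg. have HPne h : PP m h <> 0 by have := PP_pos m h Hm; lia.
  set uf := fun h => epsilon (inhabits 0) (fun u => exists v, u * xz x h + v * PP m h = 1).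
  have Hu : forall h, cong (PP m h) (uf h * xz x h) 1.
  { move=> h. have [v Hv] : exists v, uf h * xz x h + v * PP m h = 1.
    { rewrite /uf. apply: (epsilon_spec (inhabits 0) (fun u => exists v, u * xz x h + v * PP m h = 1)).
      have := Z.gcd_bezout _ _ _ (gcd_PP m x h Hm Hx Hg). move=> [u [v Huv]]. by exists u, v. }
    exists (- v). lia. }
  split => //. exists (mkZm m uf). split.
  - apply: mk_is_Zm => // h.
    have H1 : cong (PP m h) (uf (S h) * xz x h) 1.
    { apply: cong_trans (cong_mul _ _ _ _ _ (cong_refl _ _) (cong_sym _ _ _ (is_Zm_compat m x h (S h) Hm Hx ltac:(lia)))) _.
      apply: cong_weak (Hu (S h)). apply: PP_le. lia. }
    rewrite -/(cong _ _ _).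
    apply: cong_trans (_ : cong _ _ (uf (S h) * (uf h * xz x h))) _.
    { apply: cong_sym. rewrite -{2}(Z.mul_1_r (uf (S h))). apply: cong_mul. exact: cong_refl. exact: Hu. }
    replace (uf (S h) * (uf h * xz x h)) with (uf h * (uf (S h) * xz x h)) by ring.
    rewrite -{2}(Z.mul_1_r (uf h)). apply: cong_mul. exact: cong_refl. exact: H1.
  - apply: (ext m) => // h; rewrite ?lv_mul /Zm_one ?lv_int //; try exact: mod_range.
    apply: cong_trans. apply: cong_mod. exact: HPne.
    apply: cong_sym. apply: cong_trans. apply: cong_mod. exact: HPne.
    change (toZ 1%R) with 1. apply: cong_sym.
    apply: cong_trans _ (Hu h). rewrite lv_mk // Z.mul_comm. apply: cong_mul. exact: cong_mod. exact: cong_refl.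
Qed.

Lemma gcd_cong m a b : (Z.abs (toZ m) | a - b) -> Z.gcd a (toZ m) = Z.gcd b (toZ m).
Proof.
  move=> /Z.divide_abs_l [c Hc]. have -> : a = b + c * toZ m by lia.
  by rewrite Z.gcd_comm Z.gcd_add_mult_diag_r Z.gcd_comm.
Qed.

Lemma digits_cong m x y h : (m != 0)%R -> is_Zm m x -> is_Zm m y -> Z.gcd (xz x 1) (toZ m) = 1 ->
  (forall i, (i < h)%coq_nat -> Zm_r m x (S i) = Zm_r m y (S i)) -> cong (PP m h) (xz y h) (xz x h).
Proof.
  move=> Hm Hx Hy Hg H. case: h H => [|h] H; first exact: cong_1.
  apply/PP_pw. apply: uniqU; first exact: mz_neq0.
  - rewrite gcd_lev //. lia.
  - move=> i Hi. rewrite !rdlev //; try lia. by rewrite H.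
Qed.

Lemma digits_of_cong m x y h : (m != 0)%R -> is_Zm m x -> is_Zm m y -> cong (PP m h) (xz y h) (xz x h) ->
  forall i, (i < h)%coq_nat -> Zm_r m y (S i) = Zm_r m x (S i).
Proof.
  move=> Hm Hx Hy H i Hi. apply: Nat2Z.inj. rewrite -(rdlev m y i h) // -(rdlev m x i h) //.
  case: (locA_P m (xz x h) (xz y h) h Hm H) => _ H2. exact: H2.
Qed.

Lemma unit_is_Zm m x : Zm_unit m x -> is_Zm m x.
Proof. by case. Qed.

Lemma f_digit m xi : (m != 0)%R -> Zm_unit m xi -> digit_space m (fun i => Zm_r m xi i.+1).
Proof.
  move=> Hm Hu. have Hxi := unit_is_Zm m xi Hu. split.
  - rewrite /= Zm_r1 //. apply/coprime_Z. rewrite toZ_absz Z.gcd_abs_r. exact: unit_gcd.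
  - move=> i. apply/ltP. have := Zm_r_val m xi i Hm Hxi. have := Rd_bound (toZ m) (xz xi (S i)) i (mz_neq0 m Hm).
    rewrite -toZ_absz. lia.
Qed.

Lemma f_inj m x y : (m != 0)%R -> Zm_unit m x -> Zm_unit m y ->
  (fun i => Zm_r m x i.+1) = (fun i => Zm_r m y i.+1) -> x = y.
Proof.
  move=> Hm Hux Huy E. have Hx := unit_is_Zm m x Hux. have Hy := unit_is_Zm m y Huy.
  apply: (ext m) => // [h|h|h]; try exact: is_Zm_range.
  apply: cong_sym. apply: digits_cong => //. exact: unit_gcd.
  move=> i _. exact: (congr1 (fun f => f i) E).
Qed.

Lemma f_surj m b : (m != 0)%R -> digit_space m b -> exists x, Zm_unit m x /\ (fun i => Zm_r m x i.+1) = b.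
Proof.
  move=> Hm [Hb0 Hb]. have Hz := mz_neq0 m Hm.
  have HPne h : PP m h <> 0 by have := PP_pos m h Hm; lia.
  set rho := fun i => Z.of_nat (b i).
  have Hr : forall i, 0 <= rho i < Z.abs (toZ m).
  { move=> i. have := Hb i. move/ltP. rewrite /rho -toZ_absz. lia. }
  have Hg : Z.gcd (rho 0%nat) (toZ m) = 1.
  { move/coprime_Z: Hb0. by rewrite toZ_absz Z.gcd_abs_r. }
  have Hex := existX (toZ m) rho Hz Hr Hg.
  set Ef := fun k => epsilon (inhabits 0) (fun E => Z.gcd E (toZ m) = 1 /\ forall i, (i < k)%coq_nat -> Rd (toZ m) E (S i) = rho i).
  have HE : forall k, Z.gcd (Ef k) (toZ m) = 1 /\ forall i, (i < k)%coq_nat -> Rd (toZ m) (Ef k) (S i) = rho i.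
  { move=> k. exact: (epsilon_spec (inhabits 0) _ (Hex k)). }
  have Hc : forall h, (PP m h | Ef (S h) - Ef h).
  { move=> h. apply/PP_pw. apply: uniqU => //; first exact: (proj1 (HE h)).
    move=> i Hi. rewrite (proj2 (HE (S h))) ?(proj2 (HE h)) //. lia. }
  have Hxi := mk_is_Zm m Ef Hm Hc.
  exists (mkZm m Ef). split.
  - apply: gcd_unit => //. rewrite -(proj1 (HE 1%nat)). apply: gcd_cong.
    rewrite -PP1 lv_mk //. exact: cong_mod.
  - apply: (@functional_extensionality nat nat) => i. apply: Nat2Z.inj.
    rewrite Zm_r_val //.
    case: (locA_P m (Ef (S i)) (xz (mkZm m Ef) (S i)) (S i) Hm) => [|_ H2].
    { rewrite lv_mk //. exact: cong_mod. }
    rewrite H2; last lia. exact: (proj2 (HE (S i)) i ltac:(lia)).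
Qed.

Lemma shift_cong m x c h : (m != 0)%R ->
  cong (PP m h) (xz (Zm_add m x (Zm_mul m (Zm_of_int m (m ^+ h)%R) c)) h) (xz x h).
Proof.
  move=> Hm. have HPne := PP_pos m h Hm.
  rewrite lv_add // lv_mul // lv_int // toZ_exp.
  apply: cong_trans. apply: cong_mod. lia.
  rewrite -{2}(Z.add_0_r (xz x h)). apply: cong_add; first exact: cong_refl.
  apply: cong_trans. apply: cong_mod. lia.
  apply: cong_trans. apply: cong_mul. apply: cong_mod. lia. exact: cong_refl.
  rewrite /cong Z.sub_0_r. apply: Z.divide_mul_l. apply/PP_pw. exact: Z.divide_refl.
Qed.

Lemma shift_exists m x y h : (m != 0)%R -> is_Zm m x -> is_Zm m y -> cong (PP m h) (xz y h) (xz x h) ->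
  exists c, is_Zm m c /\ y = Zm_add m x (Zm_mul m (Zm_of_int m (m ^+ h)%R) c).
Proof.
  move=> Hm Hx Hy H. have Hz := mz_neq0 m Hm.
  have HPne l : PP m l <> 0 by have := PP_pos m l Hm; lia.
  have Hpw : pw (toZ m) h <> 0 by rewrite /pw; apply: Z.pow_nonzero; lia.
  set D := fun l => xz y (Nat.add l h) - xz x (Nat.add l h).
  have HD : forall l, (pw (toZ m) h | D l).
  { move=> l. apply/PP_pw. rewrite /D.
    replace (xz y (Nat.add l h) - xz x (Nat.add l h)) with
      ((xz y (Nat.add l h) - xz y h) - (xz x (Nat.add l h) - xz x h) + (xz y h - xz x h)) by ring.
    apply: Z.divide_add_r; [apply: Z.divide_sub_r|exact: H]; apply: is_Zm_compat => //; lia. }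
  set C := fun l => D l / pw (toZ m) h.
  have HC : forall l, D l = pw (toZ m) h * C l by move=> l; exact: divex.
  have Hcz : is_Zm m (mkZm m C).
  { apply: mk_is_Zm => // l.
    have H1 : (PP m (Nat.add l h) | D (S l) - D l).
    { rewrite /D. replace (xz y (Nat.add (S l) h) - xz x (Nat.add (S l) h) - (xz y (Nat.add l h) - xz x (Nat.add l h))) with
        ((xz y (Nat.add (S l) h) - xz y (Nat.add l h)) - (xz x (Nat.add (S l) h) - xz x (Nat.add l h))) by ring.
      apply: Z.divide_sub_r; apply: is_Zm_compat => //; lia. }
    rewrite HC (HC l) -Z.mul_sub_distr_l PP_add Z.mul_comm in H1.
    apply (proj1 (Z.divide_abs_r _ _)).
    apply (proj1 (Z.mul_divide_cancel_l _ _ (PP m h) (HPne h))).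
    have -> : PP m h * Z.abs (C (S l) - C l) = Z.abs (pw (toZ m) h * (C (S l) - C l)).
    { rewrite Z.abs_mul /PP /pw Z.abs_pow. reflexivity. }
    exact: (proj2 (Z.divide_abs_r _ _) H1). }
  exists (mkZm m C). split => //.
  apply: (ext m) => // [l|l|l]; first exact: is_Zm_range.
  { rewrite lv_add //. exact: mod_range. }
  rewrite lv_add // lv_mul // lv_int // toZ_exp lv_mk //.
  apply: cong_sym. apply: cong_trans. apply: cong_mod. exact: HPne.
  apply: cong_trans. apply: cong_add. exact: cong_refl.
  apply: cong_trans. apply: cong_mod. exact: HPne.
  apply: cong_mul. apply: cong_mod. exact: HPne. apply: cong_mod. exact: HPne.
  change (toZ m ^ Z.of_nat h) with (pw (toZ m) h). rewrite -HC /D.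
  replace (xz x l + (xz y (Nat.add l h) - xz x (Nat.add l h))) with
    (xz y (Nat.add l h) - (xz x (Nat.add l h) - xz x l)) by ring.
  rewrite /cong. replace (xz y (Nat.add l h) - (xz x (Nat.add l h) - xz x l) - xz y l) with
    ((xz y (Nat.add l h) - xz y l) - (xz x (Nat.add l h) - xz x l)) by ring.
  apply: Z.divide_sub_r; apply: is_Zm_compat => //; lia.
Qed.

Lemma partB m : (m != 0)%R ->
  homeomorphism (Zm_units_open m) (digit_open m) (Zm_unit m) (digit_space m)
       (fun xi i => Zm_r m xi i.+1).
Proof.
  move=> Hm. split; [|split; [|split]].
  - move=> x Hx. exact: f_digit.
  - move=> x y Hx Hy E. exact: f_inj E.
  - move=> b Hb. exact: f_surj.
  - move=> V HV. split.
    + move=> [HVd Hop]. split; first by move=> x [].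
      move=> x [Hux HVx]. case: (Hop _ HVx) => k Hk. exists k => y Huy [c [Hc Hyc]].
      split => //. apply: Hk; first exact: f_digit.
      move=> i /ltP Hi.
      apply: (digits_of_cong m x _ k Hm (unit_is_Zm _ _ Hux)); last exact: Hi.
      * exact: unit_is_Zm.
      * rewrite Hyc. exact: shift_cong.
    + move=> [_ Hop]. split => // a Ha.
      case: (f_surj m a Hm (HV a Ha)) => x [Hux Hfx].
      case: (Hop x (conj Hux (eq_ind_r V Ha Hfx))) => h Hh.
      exists h => b Hb Hab.
      case: (f_surj m b Hm Hb) => y [Huy Hfy].
      have Hx := unit_is_Zm _ _ Hux. have Hy := unit_is_Zm _ _ Huy.
      have Hcg : cong (PP m h) (xz y h) (xz x h).
      { apply: digits_cong => //. exact: unit_gcd.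
        move=> i Hi. have E1 := congr1 (fun f => f i) Hfx. have E2 := congr1 (fun f => f i) Hfy.
        simpl in E1, E2. rewrite E1 E2. symmetry. apply: Hab. by apply/ltP. }
      case: (shift_exists m x y h Hm Hx Hy Hcg) => c [Hc Hyc].
      case: (Hh y Huy (ex_intro _ c (conj Hc Hyc))) => _. by rewrite Hfy.
Qed.

Lemma toZ_divz (a : int) (P : nat) : (0 < P)%nat -> toZ (divz a (Posz P)) = toZ a / Z.of_nat P.
Proof.
  move=> HP. have HPz : 0 < Z.of_nat P by move/ltP: HP; lia.
  apply: (Z.div_unique _ _ _ (toZ (modz a (Posz P)))).
  - left. rewrite toZ_modz //. apply: Z.mod_pos_bound. lia.
  - rewrite {1}(divz_eq a (Posz P)) toZ_add toZ_mul toZ_nat. ring.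
Qed.

Lemma div_compat m h dz Y Y' : 0 < dz -> (dz | toZ m) -> (dz | Y) -> (dz | Y') ->
  (PP m (S h) | Y' - Y) -> (PP m h | Y' / dz - Y / dz).
Proof.
  move=> Hd [n Hn] [y Hy] [y' Hy'] H. subst Y Y'.
  rewrite !Z.div_mul; try lia.
  apply (proj1 (Z.mul_divide_cancel_l _ _ dz ltac:(lia))).
  replace (dz * (y' - y)) with (y' * dz - y * dz) by ring.
  apply: (Z.divide_trans _ (PP m (S h))); last exact: H.
  rewrite PP_S Hn Z.abs_mul (Z.abs_eq dz); last lia.
  exists (Z.abs n). ring.
Qed.

Lemma lv_cong_mul m a b h : (m != 0)%R -> cong (PP m h) ((a mod PP m h * (b mod PP m h)) mod PP m h) (a * b).
Proof.
  move=> Hm. have HP := PP_pos m h Hm.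
  apply: cong_trans. apply: cong_mod. lia.
  apply: cong_mul; apply: cong_mod; lia.
Qed.

Lemma ideal_d_dvd m xi d : (m != 0)%R -> is_Zm m xi -> Zm_gcd m m xi d -> (Z.of_nat d | toZ m).
Proof.
  move=> Hm Hxi [Hd [Hpr Hid]].
  have HPne h : PP m h <> 0 by have := PP_pos m h Hm; lia.
  have Hz := int_is_Zm m m Hm.
  case: (proj1 (Hid _ Hz)) => [|c [Hc Hzc]].
  { exists (Zm_one m), (Zm_of_int m 0%R). split; first exact: int_is_Zm.
    split; first exact: int_is_Zm.
    apply: (ext m) => // h; rewrite ?lv_int ?lv_add //; try exact: mod_range.
    apply: cong_sym. apply: cong_trans. apply: cong_mod. exact: HPne.
    rewrite -(Z.add_0_r (toZ m mod PP m h)). apply: cong_add.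
    - rewrite lv_mul // /Zm_one !lv_int //. apply: cong_trans. apply: lv_cong_mul => //.
      change (toZ 1%R) with 1. rewrite Z.mul_1_r. apply: cong_sym. apply: cong_mod. exact: HPne.
    - rewrite lv_mul // lv_int //. change (toZ 0%R) with 0. rewrite Z.mod_0_l // Z.mul_0_r Z.mod_0_l //.
      exact: cong_refl. }
  have E1 := congr1 (fun f => xz f d) Hzc. simpl in E1.
  rewrite lv_int // lv_mul // lv_int // toZ_nat in E1.
  have Hdiv : (Z.of_nat d | PP m d).
  { rewrite -PP_nat. apply: dvdn_Z. apply/dvdn_partP => // p.
    rewrite mem_primes => /and3P [pp _ pd]. rewrite p_part.
    apply: (@dvdn_trans (expn p d)). apply: dvdn_exp2l. apply: ltnW. exact: ltn_logl.
    apply: dvdn_exp2r. exact: Hpr. }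
  have H1 : cong (PP m d) (toZ m) (Z.of_nat d * xz c d).
  { apply: cong_trans (cong_sym _ _ _ (cong_mod _ _ (HPne d))) _. rewrite E1.
    apply: cong_trans. apply: cong_mod. exact: HPne. apply: cong_mul. apply: cong_mod. exact: HPne. exact: cong_refl. }
  have H2 := cong_weak _ _ _ _ Hdiv H1. rewrite /cong in H2.
  replace (toZ m) with ((toZ m - Z.of_nat d * xz c d) + Z.of_nat d * xz c d) by ring.
  apply: Z.divide_add_r => //. exact: Z.divide_factor_l.
Qed.

Lemma partA1 m xi xi' d eta eta' : (m != 0)%R -> is_Zm m xi -> is_Zm m xi' -> Zm_gcd m m xi d ->
  is_Zm m eta -> is_Zm m eta' ->
  xi = Zm_mul m (Zm_of_int m (Posz d)) eta -> xi' = Zm_mul m (Zm_of_int m (Posz d)) eta' ->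
  Zm_proj (divz m (Posz d)) eta = Zm_proj (divz m (Posz d)) eta' ->
  forall i, Zm_r m xi (S i) = Zm_r m xi' (S i).
Proof.
  move=> Hm Hxi Hxi' Hg Heta Heta' E E' Hp i.
  have Hz := mz_neq0 m Hm.
  have HPne h : PP m h <> 0 by have := PP_pos m h Hm; lia.
  have Hdd := ideal_d_dvd m xi d Hm Hxi Hg.
  case: Hg => Hd _. have Hdz : 0 < Z.of_nat d by move/ltP: Hd; lia.
  set n := toZ m / Z.of_nat d.
  have Hmn : toZ m = Z.of_nat d * n by apply: divex => //; lia.
  have Hn0 : n <> 0 by move=> H; apply: Hz; rewrite Hmn H; ring.
  have Htn : toZ (divz m (Posz d)) = n by rewrite toZ_divz.
  have Hdn0 : (divz m (Posz d) != 0)%R.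
  { apply/negP => /eqP H. apply: Hn0. by rewrite -Htn H. }
  set k := S i.
  have key : forall x e, is_Zm m x -> x = Zm_mul m (Zm_of_int m (Posz d)) e ->
     Z.of_nat (Zm_r m x k) = Z.of_nat d * Rd n (xz e k) k.
  { move=> x e Hx Ex. rewrite Zm_r_val //.
    have Hc : cong (PP m k) (Z.of_nat d * xz e k) (xz x k).
    { rewrite Ex lv_mul // lv_int // toZ_nat. apply: cong_sym.
      apply: cong_trans. apply: cong_mod. exact: HPne. apply: cong_mul. apply: cong_mod. exact: HPne. exact: cong_refl. }
    case: (locA_P m (xz x k) (Z.of_nat d * xz e k) k Hm Hc) => _ H2.
    rewrite -H2; last (rewrite /k; lia).
    rewrite Hmn. exact: (proj2 (reduce _ _ _ Hdz Hn0 k)). }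
  apply: Nat2Z.inj. rewrite (key xi eta) // (key xi' eta') //. f_equal.
  have E1 := congr1 (fun f => xz f k) Hp. simpl in E1. rewrite !lv_proj // in E1.
  have Hc : (pw n k | xz eta' k - xz eta k).
  { apply/Z.divide_abs_l. rewrite /pw Z.abs_pow -Htn -/(PP _ k).
    have HP := PP_pos (divz m (Posz d)) k Hdn0.
    have h1 := Z.div_mod (xz eta k) (PP (divz m (Posz d)) k) ltac:(lia).
    have h2 := Z.div_mod (xz eta' k) (PP (divz m (Posz d)) k) ltac:(lia).
    exists (xz eta' k / PP (divz m (Posz d)) k - xz eta k / PP (divz m (Posz d)) k). lia. }
  case: (locA n (xz eta k) (xz eta' k) k Hn0 Hc) => _ H2.
  symmetry. apply: H2. rewrite /k. lia.
Qed.

Lemma compat1 m x h : (m != 0)%R -> is_Zm m x -> (PP m h | xz x (S h) - xz x h).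
Proof. move=> Hm Hx. apply: compat => //. lia. Qed.

Lemma dz_facts m xi h : (m != 0)%R -> is_Zm m xi ->
  Z.of_nat (gcdn (xi 1%nat) (absz m)) = Z.gcd (xz xi (S h)) (toZ m).
Proof.
  move=> Hm Hxi. rewrite gcdn_Z toZ_absz Z.gcd_abs_r gcd_lev //. lia.
Qed.

Lemma partG m xi : (m != 0)%R -> is_Zm m xi -> Zm_gcd m m xi (gcdn (xi 1%nat) (absz m)).
Proof.
  move=> Hm Hxi. set d := gcdn (xi 1%nat) (absz m).
  have Hz := mz_neq0 m Hm.
  have HPne h : PP m h <> 0 by have := PP_pos m h Hm; lia.
  have Hd : (0 < d)%nat by rewrite /d gcdn_gt0 absz_gt0 Hm orbT.
  have Hdz : 0 < Z.of_nat d by move/ltP: Hd; lia.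
  have HdX : forall h, (Z.of_nat d | xz xi (S h)) by move=> h; rewrite /d (dz_facts m xi h) //; apply: Z.gcd_divide_l.
  have Hdm : (Z.of_nat d | toZ m) by rewrite /d (dz_facts m xi 0) //; apply: Z.gcd_divide_r.
  split => //. split.
  { move=> p _ Hp. apply: dvdn_trans Hp _. exact: dvdn_gcdr. }
  move=> z Hzz. split.
  - move=> [a [b [Ha [Hb Hzab]]]].
    set n := toZ m / Z.of_nat d.
    have Hmn : toZ m = Z.of_nat d * n by apply: divex => //; lia.
    set C := fun h => n * xz a h + (xz xi (S h) / Z.of_nat d) * xz b h.
    have HCc : forall h, (PP m h | C (S h) - C h).
    { move=> h. rewrite /C.
      replace (n * xz a (S h) + xz xi (S (S h)) / Z.of_nat d * xz b (S h) - (n * xz a h + xz xi (S h) / Z.of_nat d * xz b h))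
        with (n * (xz a (S h) - xz a h) + xz xi (S (S h)) / Z.of_nat d * (xz b (S h) - xz b h) + (xz xi (S (S h)) / Z.of_nat d - xz xi (S h) / Z.of_nat d) * xz b h) by ring.
      apply: Z.divide_add_r; [apply: Z.divide_add_r|].
      - apply: Z.divide_mul_r. exact: compat1.
      - apply: Z.divide_mul_r. exact: compat1.
      - apply: Z.divide_mul_l. apply: div_compat => //. exact: compat1. }
    exists (mkZm m C). split; first exact: mk_is_Zm.
    rewrite Hzab. apply: (ext m) => // h; rewrite ?lv_add ?lv_mul ?lv_int ?lv_mk // ?toZ_nat; try exact: mod_range.
    apply: cong_trans. apply: cong_mod. exact: HPne.
    apply: cong_sym. apply: cong_trans. apply: cong_mod. exact: HPne.
    apply: cong_trans. apply: cong_mul. apply: cong_mod. exact: HPne. apply: cong_mod. exact: HPne.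
    rewrite /C.
    have -> : Z.of_nat d * (n * xz a h + xz xi (S h) / Z.of_nat d * xz b h)
      = toZ m * xz a h + xz xi (S h) * xz b h.
    { rewrite Hmn. have := divex _ _ (ltac:(lia) : Z.of_nat d <> 0) (HdX h). lia. }
    apply: cong_add.
    + apply: cong_sym. apply: cong_trans. apply: cong_mod. exact: HPne.
      apply: cong_mul. apply: cong_mod. exact: HPne. exact: cong_refl.
    + apply: cong_sym. apply: cong_trans. apply: cong_mod. exact: HPne.
      apply: cong_mul. apply: cong_sym. exact: compat1. exact: cong_refl.
  - move=> [c [Hc Hzc]].
    have [u [v Huv]] := Z.gcd_bezout _ _ _ (esym (dz_facts m xi 0 Hm Hxi)).
    have Hsig : forall h, (toZ m | xz xi (S h) - xz xi 1).
    { move=> h. apply/Z.divide_abs_l. rewrite -PP1. apply: is_Zm_compat => //. lia. }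
    set sg := fun h => (xz xi (S h) - xz xi 1) / toZ m.
    have Hsg : forall h, xz xi (S h) - xz xi 1 = toZ m * sg h by move=> h; exact: divex.
    set A := fun h => (v - u * sg h) * xz c h.
    set B := fun h => u * xz c h.
    have HA : is_Zm m (mkZm m A).
    { apply: mk_is_Zm => // h. rewrite /A.
      replace ((v - u * sg (S h)) * xz c (S h) - (v - u * sg h) * xz c h) with
        ((v - u * sg (S h)) * (xz c (S h) - xz c h) - u * (sg (S h) - sg h) * xz c h) by ring.
      apply: Z.divide_sub_r.
      - apply: Z.divide_mul_r. exact: compat1.
      - apply: Z.divide_mul_l. apply: Z.divide_mul_r. apply: (cancel_m m h) => //.
        rewrite Z.mul_sub_distr_l -!Hsg.
        replace (xz xi (S (S h)) - xz xi 1 - (xz xi (S h) - xz xi 1)) with (xz xi (S (S h)) - xz xi (S h)) by ring.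
        exact: compat1. }
    have HB : is_Zm m (mkZm m B).
    { apply: mk_is_Zm => // h. rewrite /B -Z.mul_sub_distr_l. apply: Z.divide_mul_r. exact: compat1. }
    exists (mkZm m A), (mkZm m B). split => //. split => //.
    rewrite Hzc. apply: (ext m) => // h; rewrite ?lv_add ?lv_mul ?lv_int ?lv_mk // ?toZ_nat; try exact: mod_range.
    apply: cong_trans. apply: cong_mod. exact: HPne.
    apply: cong_trans. apply: cong_mul. apply: cong_mod. exact: HPne. apply: cong_refl.
    apply: cong_sym. apply: cong_trans. apply: cong_mod. exact: HPne.
    apply: cong_trans. apply: cong_add.
    { apply: cong_trans. apply: cong_mod. exact: HPne.
      apply: cong_mul. apply: cong_mod. exact: HPne. apply: cong_mod. exact: HPne. }
    { apply: cong_trans. apply: cong_mod. exact: HPne.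
      apply: cong_mul. apply: cong_sym. exact: compat1. apply: cong_mod. exact: HPne. }
    rewrite /A /B. apply: cong_eq.
    have Hs := Hsg h.
    have -> : toZ m * ((v - u * sg h) * xz c h) + xz xi (S h) * (u * xz c h)
       = (u * xz xi 1 + v * toZ m) * xz c h + u * (xz xi (S h) - xz xi 1 - toZ m * sg h) * xz c h by ring.
    rewrite Hs Huv /d. ring.
Qed.

Lemma mod_eq_of_cong P a b : 0 < P -> (P | a - b) -> a mod P = b mod P.
Proof. move=> HP [k Hk]. have -> : a = b + k * P by lia. by rewrite Z.mod_add; lia. Qed.

Lemma etaC m xi : (m != 0)%R -> is_Zm m xi ->
  let dz := Z.of_nat (gcdn (xi 1%nat) (absz m)) in
  is_Zm m (mkZm m (fun h => xz xi (S h) / dz)) /\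
  xi = Zm_mul m (Zm_of_int m (Posz (gcdn (xi 1%nat) (absz m)))) (mkZm m (fun h => xz xi (S h) / dz)).
Proof.
  move=> Hm Hxi dz. have Hz := mz_neq0 m Hm.
  have HPne h : PP m h <> 0 by have := PP_pos m h Hm; lia.
  have Hd : (0 < gcdn (xi 1%nat) (absz m))%nat by rewrite gcdn_gt0 absz_gt0 Hm orbT.
  have Hdz : 0 < dz by rewrite /dz; move/ltP: Hd; lia.
  have HdX : forall h, (dz | xz xi (S h)) by move=> h; rewrite /dz (dz_facts m xi h) //; apply: Z.gcd_divide_l.
  have Hdm : (dz | toZ m) by rewrite /dz (dz_facts m xi 0) //; apply: Z.gcd_divide_r.
  split.
  - apply: mk_is_Zm => // h. apply: div_compat => //. exact: compat1.
  - apply: (ext m) => // h; rewrite ?lv_mul ?lv_int ?lv_mk // ?toZ_nat; try exact: mod_range.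
    exact: is_Zm_range.
    apply: cong_sym. apply: cong_trans. apply: cong_mod. exact: HPne.
    apply: cong_trans. apply: cong_mul. apply: cong_mod. exact: HPne. apply: cong_mod. exact: HPne.
    rewrite -/dz -(divex _ _ (ltac:(lia) : dz <> 0) (HdX h)). exact: compat1.
Qed.

Lemma partA2 m xi xi' : (m != 0)%R -> is_Zm m xi -> is_Zm m xi' ->
  (forall i, Zm_r m xi (S i) = Zm_r m xi' (S i)) ->
  exists d : nat, Zm_gcd m m xi d /\ Zm_gcd m m xi' d /\
         exists eta eta' : padic, is_Zm m eta /\ is_Zm m eta' /\
           xi = Zm_mul m (Zm_of_int m (Posz d)) eta /\
           xi' = Zm_mul m (Zm_of_int m (Posz d)) eta' /\
           Zm_proj (divz m (Posz d)) eta = Zm_proj (divz m (Posz d)) eta'.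
Proof.
  move=> Hm Hxi Hxi' H.
  have Hz := mz_neq0 m Hm.
  have H1 : xi' 1%nat = xi 1%nat by rewrite -(Zm_r1 m xi') // -(Zm_r1 m xi) // H.
  exists (gcdn (xi 1%nat) (absz m)). split; first exact: partG.
  split; first by rewrite -H1; exact: partG.
  case: (etaC m xi Hm Hxi) => Heta E. case: (etaC m xi' Hm Hxi') => Heta' E'. rewrite H1 in Heta' E'.
  set d := gcdn (xi 1%nat) (absz m) in Heta E Heta' E' *.
  set dz := Z.of_nat d in Heta E Heta' E' *.
  do 2 eexists. split; first exact: Heta. split; first exact: Heta'. split; first exact: E. split; first exact: E'.
  have Hd : (0 < d)%nat by rewrite /d gcdn_gt0 absz_gt0 Hm orbT.
  have Hdz : 0 < dz by rewrite /dz; move/ltP: Hd; lia.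
  have Hdm : (dz | toZ m) by rewrite /dz /d (dz_facts m xi 0) //; apply: Z.gcd_divide_r.
  set n := toZ m / dz.
  have Hmn : toZ m = dz * n by apply: divex => //; lia.
  have Hn0 : n <> 0 by move=> Hn; apply: Hz; rewrite Hmn Hn; ring.
  have Htn : toZ (divz m (Posz d)) = n by rewrite toZ_divz.
  have Hdn0 : (divz m (Posz d) != 0)%R.
  { apply/negP => /eqP Hx. apply: Hn0. by rewrite -Htn Hx. }
  apply: (@functional_extensionality nat nat) => h. apply: Nat2Z.inj.
  change (xz (Zm_proj (divz m (Posz d)) (mkZm m (fun h0 => xz xi (S h0) / dz))) h = xz (Zm_proj (divz m (Posz d)) (mkZm m (fun h0 => xz xi' (S h0) / dz))) h).
  rewrite !lv_proj // !lv_mk //.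
  have HPn : 0 < PP (divz m (Posz d)) h by exact: PP_pos.
  have HPm : 0 < PP m h by exact: PP_pos.
  have Hdiv : (PP (divz m (Posz d)) h | PP m h).
  { rewrite /PP Htn Hmn Z.abs_mul Z.pow_mul_l. exists (Z.abs dz ^ Z.of_nat h). ring. }
  rewrite -!Zmod_div_mod //.
  apply: mod_eq_of_cong => //. apply: cong_sym.
  rewrite /PP Htn -Z.abs_pow. apply/Z.divide_abs_l.
  have HX : forall y, is_Zm m y -> Z.gcd (xz y 1) (toZ m) = dz ->
     xz y (S h) = dz * (xz y (S h) / dz) /\ Z.gcd (xz y (S h) / dz) n = 1.
  { move=> y Hy Hg.
    have Hg' : Z.gcd (xz y (S h)) (toZ m) = dz by rewrite gcd_lev //; lia.
    have Hy1 : xz y (S h) = dz * (xz y (S h) / dz).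
    { apply: divex; first lia. rewrite -Hg'. exact: Z.gcd_divide_l. }
    split => //. rewrite Hmn {1}Hy1 Z.gcd_mul_mono_l_nonneg in Hg'; last lia.
    nia. }
  have Hg1 : Z.gcd (xz xi 1) (toZ m) = dz by rewrite /dz /d (dz_facts m xi 0) //.
  have Hg2 : Z.gcd (xz xi' 1) (toZ m) = dz by rewrite /xz H1.
  case: (HX xi Hxi Hg1) => HE1 HE2. case: (HX xi' Hxi' Hg2) => HF1 HF2.
  apply: uniqU => // i Hi.
  apply (proj1 (Z.mul_cancel_l _ _ dz ltac:(lia))).
  rewrite -(proj2 (reduce _ _ _ Hdz Hn0 (S i))) -(proj2 (reduce _ _ _ Hdz Hn0 (S i))).
  rewrite -Hmn -HE1 -HF1 !rdlev //; try lia. by rewrite H.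
Qed.

Close Scope Z_scope.
Delimit Scope int_scope with Z.

Theorem proposition2p4 (m : int) (hm : m != 0%R) :
  (forall xi xi' : padic, is_Zm m xi -> is_Zm m xi' ->
     ((exists d : nat, Zm_gcd m m xi d /\ Zm_gcd m m xi' d /\
         exists eta eta' : padic, is_Zm m eta /\ is_Zm m eta' /\
           xi = Zm_mul m (Zm_of_int m d%:Z) eta /\
           xi' = Zm_mul m (Zm_of_int m d%:Z) eta' /\
           Zm_proj (m %/ d%:Z)%Z eta = Zm_proj (m %/ d%:Z)%Z eta')
      <-> (forall i : nat, 0 < i -> Zm_r m xi i = Zm_r m xi' i)))
  /\ homeomorphism (Zm_units_open m) (digit_open m) (Zm_unit m) (digit_space m)
       (fun xi i => Zm_r m xi i.+1).
Proof.
  split; last exact: partB.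
  move=> xi xi' Hxi Hxi'. split.
  - move=> [d [Hg [_ [eta [eta' [He [He' [E [E' Hp]]]]]]]]] [|i] // _.
    exact: (partA1 m xi xi' d eta eta').
  - move=> H. apply: partA2 => // i. exact: H.
Qed.
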